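(* Let $t \geq 3$ and let $\Delta$ be a graph on $n$ vertices with exactly $t$ distinct valencies. Then there exists a connected graph on at most $2^{n+2}$ vertices whose adjacency matrix has exactly four distinct eigenvalues, which has at least $t$ distinct valencies, and which contains $\Delta$ as an induced subgraph.
   Context: Graphs are finite, simple and undirected; eigenvalues of a graph are those of its adjacency matrix; valencies are vertex degrees. *)

(* Defs.v *)
From HB Require Import structures.
From mathcomp Require Import all_boot all_order all_algebra all_field.
Set Implicit Arguments. Unset Strict Implicit. Unset Printing Implicit Defensive.
Import Order.TTheory GRing.Theory Num.Theory.

Definition simple_graph (T : finType) (e : rel T) : Prop :=
  symmetric e /\ irreflexive e.

Definition valency (T : finType) (e : rel T) (x : T) : nat := #|[set y | e x y]|.

Definition num_valencies (T : finType) (e : rel T) : nat :=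
  size (undup [seq valency e x | x <- enum T]).

Definition connected_graph (T : finType) (e : rel T) : Prop :=
  forall x y : T, connect e x y.

Definition adj_mx (m : nat) (e : rel 'I_m) : 'M[algC]_m :=
  \matrix_(i, j) ((e i j)%:R)%R.

Definition num_eigenvalues_eq (m : nat) (e : rel 'I_m) (k : nat) : Prop :=
  exists s : seq algC, [/\ uniq s, size s = k &
    forall a : algC, eigenvalue (adj_mx e) a <-> a \in s].

Definition induced_subgraph (T : finType) (d : rel T) (m : nat) (e : rel 'I_m) : Prop :=
  exists f : T -> 'I_m, injective f /\ forall x y : T, e (f x) (f y) = d x y.

(* Main.v *)
Require Import Defs.
From HB Require Import structures.
From mathcomp Require Import all_boot all_order all_algebra all_field.
From mathcomp Require Import ring zify.
Set Warnings "-notation-overridden,-ambiguous-paths,-coercions".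
Set Implicit Arguments. Unset Strict Implicit. Unset Printing Implicit Defensive.
Import Order.TTheory GRing.Theory Num.Theory.

Local Open Scope ring_scope.

Definition dotv (m : nat) (v w : 'rV[algC]_m) : algC := \sum_k v 0 k * w 0 k.

Lemma dotvC m (v w : 'rV[algC]_m) : dotv v w = dotv w v.
Proof. by apply: eq_bigr => k _; rewrite mulrC. Qed.

Lemma dotv_mulmx m (v w : 'rV[algC]_m) (B : 'M_m) :
  dotv (v *m B) w = dotv v (w *m B^T).
Proof.
rewrite /dotv.
under eq_bigr do rewrite mxE big_distrl /=.
rewrite exchange_big /=; apply: eq_bigr => i _.
rewrite mxE big_distrr /=; apply: eq_bigr => k _.
by rewrite !mxE -mulrA [B i k * _]mulrC.
Qed.

Lemma dotvDl m (v1 v2 w : 'rV[algC]_m) : dotv (v1 + v2) w = dotv v1 w + dotv v2 w.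
Proof. by rewrite /dotv -big_split; apply: eq_bigr => k _; rewrite mxE mulrDl. Qed.

Lemma dotvZl m a (v w : 'rV[algC]_m) : dotv (a *: v) w = a * dotv v w.
Proof. by rewrite /dotv mulr_sumr; apply: eq_bigr => k _; rewrite mxE mulrA. Qed.

Lemma dotvNl m (v w : 'rV[algC]_m) : dotv (- v) w = - dotv v w.
Proof. by rewrite /dotv -sumrN; apply: eq_bigr => k _; rewrite mxE mulNr. Qed.

Lemma dotvBl m (v1 v2 w : 'rV[algC]_m) : dotv (v1 - v2) w = dotv v1 w - dotv v2 w.
Proof. by rewrite dotvDl dotvNl. Qed.

Lemma mulmxJ m (v : 'rV[algC]_m) :
  v *m (const_mx 1 : 'M_m) = (dotv v (const_mx 1)) *: const_mx 1.
Proof.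
apply/rowP=> j; rewrite !mxE /dotv mulr1; apply: eq_bigr => k _.
by rewrite !mxE.
Qed.

Lemma KI m (A : 'M[algC]_m) (v : 'rV_m) :
  A^T = A ->
  (const_mx 1 - 2%:R *: A) *m (const_mx 1 - 2%:R *: A) = (m%:R)%:M ->
  4%:R *: (v *m A *m A) = m%:R *: v
     + 2%:R *: ((dotv v (const_mx 1)) *: (const_mx 1 *m A) + (dotv v (const_mx 1 *m A)) *: const_mx 1)
     - (m%:R * dotv v (const_mx 1)) *: const_mx 1.
Proof.
move=> tA hK.
pose u := (const_mx 1 : 'rV[algC]_m).
have vK x : x *m (const_mx 1 - 2%:R *: A) = (dotv x u) *: u - 2%:R *: (x *m A).
  by rewrite mulmxBr -scalemxAr mulmxJ.
have uu : dotv u u = m%:R.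
  by rewrite /dotv (eq_bigr (fun _ => 1)) ?sumr_const ?card_ord // => k _; rewrite !mxE mulr1.
have dvA x : dotv (x *m A) u = dotv x (u *m A) by rewrite dotv_mulmx tA.
have := congr1 (mulmx v) hK.
rewrite mulmxA mul_mx_scalar !vK mulmxBl -!scalemxAl dotvBl !dotvZl dvA uu -mulmxA.
set d := u *m A; set w := v *m A *m A; set a := dotv v u; set b := dotv v d.
move/rowP => E; apply/rowP => k; move: (E k); rewrite !mxE.
by move=> Ek; rewrite -Ek; ring.
Qed.

Lemma dotvZr m a (v w : 'rV[algC]_m) : dotv v (a *: w) = a * dotv v w.
Proof. by rewrite dotvC dotvZl dotvC. Qed.

Lemma rowv_neq0 m (v : 'rV[algC]_m) : v != 0 -> exists k, v 0 k != 0.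
Proof.
move=> vn0; apply/existsP; apply: contraNT vn0 => /existsPn H.
by apply/eqP/rowP => k; rewrite mxE; apply/eqP/negbNE/H.
Qed.

Lemma eig_root m (A : 'M[algC]_m) a :
  A^T = A ->
  (const_mx 1 - 2%:R *: A) *m (const_mx 1 - 2%:R *: A) = (m%:R)%:M ->
  eigenvalue A a ->
  4%:R * a ^+ 2 = m%:R \/
  4%:R * a ^+ 2 - 2%:R * m%:R * a
    - (m%:R + 2%:R * dotv (const_mx 1 *m A) (const_mx 1) - m%:R ^+ 2) = 0.
Proof.
move=> tA hK /eigenvalueP [v vA vn0].
have KIv := KI v tA hK; have KIu := KI (const_mx 1) tA hK.
set u := (const_mx 1 : 'rV_m) in KIv KIu *.
set d := u *m A in KIv KIu *.
have uu : dotv u u = m%:R.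
  by rewrite /dotv (eq_bigr (fun _ => 1)) ?sumr_const ?card_ord // => k _; rewrite !mxE mulr1.
have vd : dotv v d = a * dotv v u.
  by rewrite dotvC dotv_mulmx tA vA dotvZr dotvC.
rewrite vA -scalemxAl vA scalerA vd in KIv.
rewrite uu [dotv u d]dotvC in KIu.
set D := dotv d u in KIu *.
set b := dotv v u in KIv *.
have KIvA := congr1 (mulmx^~ A) KIv.
rewrite /= mulmxBl mulmxDl -!scalemxAl mulmxDl -!scalemxAl vA in KIvA.
rewrite -/d in KIvA.
set W := d *m A in KIvA KIu.
have [k vk] := rowv_neq0 vn0.
move/rowP/(_ k): KIv; move/rowP/(_ k): KIvA; move/rowP/(_ k): KIu.
rewrite !mxE => E3 E2 E1.
move/eqP: E1; rewrite -subr_eq0 => /eqP E1.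
move/eqP: E2; rewrite -subr_eq0 => /eqP E2.
move/eqP: E3; rewrite -subr_eq0 => /eqP E3.
move: E1 E2 E3; set V := v 0 k; set Y := \sum_j u 0 j * A j k.
set Z := \sum_j d 0 j * A j k; set N : algC := m%:R => E1 E2 E3.
have key : b * (4%:R * a ^+ 2 - 2%:R * N * a - (N + 2%:R * D - N ^+ 2)) =
  - (2%:R * (a * (4%:R * a * (a * V) - (N * V + 2%:R * (b * Y + a * b * 1) - N * b * 1))
       - (4%:R * a * (a * (a * V)) - (N * (a * V) + 2%:R * (b * Z + a * b * Y) - N * b * Y)))
     - b * (4%:R * Z - (N * 1 + 2%:R * (N * Y + D * 1) - N * N * 1))) by ring.
rewrite E1 E2 E3 !mulr0 subrr oppr0 in key.
have [b0|bn0] := eqVneq b 0.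
  left; have h : (4%:R * a ^+ 2 - N) * V = 0 by rewrite -E1 b0; ring.
  by move/eqP: h; rewrite mulf_eq0 (negbTE vk) orbF subr_eq0 => /eqP.
right; move: key; rewrite mulr0 addr0 oppr0 => /eqP.
by rewrite mulf_eq0 (negbTE bn0) /= => /eqP.
Qed.

Lemma rowEntry (R : Type) m n (B : 'M[R]_(m, n)) x y : row x B 0 y = B x y.
Proof. by rewrite mxE. Qed.

Lemma combE m (a c : algC) (B C : 'rV[algC]_m) k :
  (a *: B - c *: C) 0 k = a * B 0 k - c * C 0 k.
Proof. by rewrite !mxE. Qed.

Lemma eig_half m (A : 'M[algC]_m) (s σ : algC) (i j : 'I_m) :
  A^T = A ->
  (const_mx 1 - 2%:R *: A) *m (const_mx 1 - 2%:R *: A) = (m%:R)%:M ->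
  (forall i, A i i = 0) -> (forall i j, A i j = 0 \/ A i j = 1) ->
  σ ^+ 2 = 1 -> s ^+ 2 = m%:R -> s * (s + 2%:R * σ) != 0 -> s + σ != 0 -> i != j ->
  eigenvalue A (- (σ * s) / 2%:R).
Proof.
move=> tA hK A0 A01 hσ hs hs2 hs1 ij.
set K := const_mx 1 - 2%:R *: A in hK.
set P := s%:M + σ *: K.
have PK : P *m K = (σ * s) *: P.
  rewrite mulmxDl mul_scalar_mx -scalemxAl hK; apply/matrixP => a b; rewrite !mxE.
  rewrite -hs; case: (a == b); rewrite ?mulr1n ?mulr0n;
  apply/eqP; rewrite -subr_eq0; apply/eqP;
  (transitivity ((1 - σ ^+ 2) * (s * (1 - 2%:R * A a b))); [ring | by rewrite hσ subrr mul0r]).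
pose u := (const_mx 1 : 'rV[algC]_m).
have rowK x : row x P *m K = (σ * s) *: row x P.
  by rewrite -row_mul PK; apply/rowP => k; rewrite !mxE.
have Kij x y : K x y = 1 - 2%:R * A x y by rewrite !mxE.
have Pxx x : P x x = s + σ by rewrite !mxE A0 eqxx mulr1n; ring.
have Pxy x y : x != y -> P x y = σ * (1 - 2%:R * A x y) by move=> xy; rewrite !mxE (negbTE xy) mulr0n; ring.
have Ksq x y : (1 - 2%:R * A x y) ^+ 2 = 1 by case: (A01 x y) => ->; ring.
suff [v [vK vu vn0]] : exists v : 'rV_m, [/\ v *m K = (σ * s) *: v, dotv v u = 0 & v != 0].
  apply/eigenvalueP; exists v => //.
  have : v *m K = v *m const_mx 1 - 2%:R *: (v *m A) by rewrite mulmxBr -scalemxAr.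
  rewrite vK mulmxJ -/u vu scale0r sub0r => /eqP; rewrite eq_sym -scaleNr.
  move/eqP => h; apply/rowP => k; move/rowP/(_ k): h; rewrite !mxE => h.
  move: h; set X := \sum_j _ => h.
  have -> : X = - (-2 * X) / 2%:R by field.
  by rewrite h; field.
set ci := dotv (row i P) u; set cj := dotv (row j P) u.
have [ci0|ci0] := eqVneq ci 0.
  exists (row i P); split => //; apply/eqP => /rowP/(_ i); rewrite rowEntry Pxx mxE => /eqP.
  by rewrite (negbTE hs1).
exists (cj *: row i P - ci *: row j P); split.
- by rewrite mulmxBl -!scalemxAl !rowK !scalerA scalerBr !scalerA mulrC [(σ * s) * ci]mulrC.
- by rewrite dotvBl !dotvZl -/ci -/cj mulrC subrr.
apply/eqP => /rowP h; have := h i; have := h j; rewrite !combE !rowEntry.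
rewrite Pxx (Pxy _ _ ij) Pxx (Pxy j i); last by rewrite eq_sym.
rewrite !mxE.
have Aji : A j i = A i j by rewrite -{1}tA mxE.
rewrite Aji; set κ := 1 - 2%:R * A i j => E1 E2.
have key : cj * (s * (s + 2%:R * σ)) =
   (s + σ) * (cj * (s + σ) - ci * (σ * κ)) - σ * κ * (cj * (σ * κ) - ci * (s + σ))
   - cj * σ ^+ 2 * (1 - κ ^+ 2) by ring.
rewrite E1 E2 /κ Ksq subrr !mulr0 subrr in key.
have cj0 : cj = 0 by move/eqP: key; rewrite subrr mulf_eq0 (negbTE hs2) orbF => /eqP.
move: E1; rewrite cj0 mul0r sub0r => /eqP; rewrite oppr_eq0 !mulf_eq0 (negbTE ci0) /=.
have σ0 : σ != 0 by apply/eqP => hh; move: hσ; rewrite hh expr0n /= => /eqP; rewrite eq_sym oner_eq0.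
have κ0 : κ != 0 by apply/eqP => hh; move: (Ksq i j); rewrite -/κ hh expr0n /= => /eqP; rewrite eq_sym oner_eq0.
by rewrite (negbTE hs1).
Qed.

Lemma eig_Q m (A : 'M[algC]_m) r :
  A^T = A ->
  (const_mx 1 - 2%:R *: A) *m (const_mx 1 - 2%:R *: A) = (m%:R)%:M ->
  (exists i j, ((const_mx 1 : 'rV_m) *m A) 0 i != ((const_mx 1 : 'rV_m) *m A) 0 j) ->
  4%:R * r ^+ 2 - 2%:R * m%:R * r
    - (m%:R + 2%:R * dotv (const_mx 1 *m A) (const_mx 1) - m%:R ^+ 2) = 0 ->
  eigenvalue A r.
Proof.
move=> tA hK [i [j dij]] hr.
have KIu := KI (const_mx 1) tA hK.
set u := (const_mx 1 : 'rV_m) in KIu dij hr *.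
set d := u *m A in KIu dij hr *.
have uu : dotv u u = m%:R.
  by rewrite /dotv (eq_bigr (fun _ => 1)) ?sumr_const ?card_ord // => k _; rewrite !mxE mulr1.
rewrite uu [dotv u d]dotvC in KIu.
set D := dotv d u in KIu hr *.
set W := d *m A in KIu.
apply/eigenvalueP; exists (2%:R *: d + (2%:R * r - m%:R) *: u).
  rewrite mulmxDl -!scalemxAl -/W -/d; apply/rowP => k.
  move/rowP/(_ k): KIu; rewrite !mxE => /eqP; rewrite -subr_eq0 => /eqP E3.
  apply/eqP; rewrite -subr_eq0; apply/eqP.
  move: E3 hr; set Wk := \sum_j d 0 j * A j k; set dk := \sum_j u 0 j * A j k.
  set N : algC := m%:R => E3 hr.
  have -> : 2%:R * Wk + (2%:R * r - N) * dk - r * (2%:R * dk + (2%:R * r - N) * 1) =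
     ((4%:R * Wk - (N * 1 + 2%:R * (N * dk + D * 1) - N * N * 1))
      - (4%:R * r ^+ 2 - 2%:R * N * r - (N + 2%:R * D - N ^+ 2))) / 2%:R by field.
  by rewrite E3 hr subrr mul0r.
apply/eqP => /rowP h; move: dij; have := h i; have := h j; rewrite !mxE.
set x := \sum_j _; set y := \sum_j _ => h1 h2.
set c := (2%:R * r - m%:R) * 1 in h1 h2.
have : 2%:R * x = 2%:R * y.
  apply/eqP; rewrite -subr_eq0; apply/eqP.
  by transitivity ((2%:R * x + c) - (2%:R * y + c)); [ring | rewrite ?h1 ?h2 subrr].
move/(mulfI _) => ->; first by rewrite eqxx.
by rewrite pnatr_eq0.
Qed.

Lemma dotv_self_eq0 m (z : 'rV[algC]_m) :
  (forall k, z 0 k \is Num.real) -> dotv z z = 0 -> z = 0.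
Proof.
move=> zr hz; apply/rowP => k; rewrite mxE.
have h0 : forall i : 'I_m, true -> 0 <= z 0 i * z 0 i.
  by move=> i _; rewrite -expr2 -realEsqr.
have := psumr_eq0P h0 hz (i := k) isT.
by move/eqP; rewrite mulf_eq0 orbb => /eqP.
Qed.

Lemma dotvDr m (v w1 w2 : 'rV[algC]_m) : dotv v (w1 + w2) = dotv v w1 + dotv v w2.
Proof. by rewrite dotvC dotvDl !(dotvC v). Qed.

Lemma dotvBr m (v w1 w2 : 'rV[algC]_m) : dotv v (w1 - w2) = dotv v w1 - dotv v w2.
Proof. by rewrite dotvC dotvBl !(dotvC v). Qed.

Lemma dd_id m (A : 'M[algC]_m) :
  A^T = A ->
  (const_mx 1 - 2%:R *: A) *m (const_mx 1 - 2%:R *: A) = (m%:R)%:M ->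
  4%:R * dotv ((const_mx 1 : 'rV_m) *m A) ((const_mx 1 : 'rV_m) *m A) =
    m%:R * m%:R + 4%:R * m%:R * dotv ((const_mx 1 : 'rV_m) *m A) (const_mx 1)
    - m%:R ^+ 3.
Proof.
move=> tA hK.
have KIu := KI (const_mx 1) tA hK.
set u := (const_mx 1 : 'rV_m) in KIu *.
set d := u *m A in KIu *.
have uu : dotv u u = m%:R.
  by rewrite /dotv (eq_bigr (fun _ => 1)) ?sumr_const ?card_ord // => k _; rewrite !mxE mulr1.
rewrite uu [dotv u d]dotvC in KIu.
have -> : dotv d d = dotv (d *m A) u by rewrite {1}/d dotvC dotv_mulmx tA dotvC.
rewrite -dotvZl KIu dotvBl dotvDl !dotvZl dotvDl !dotvZl uu.
set D := dotv d u; ring.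
Qed.

Lemma d_real m (A : 'M[algC]_m) k :
  (forall i j, A i j = 0 \/ A i j = 1) ->
  ((const_mx 1 : 'rV_m) *m A) 0 k \is Num.real.
Proof.
move=> A01; rewrite mxE; apply: rpred_sum => j _; rewrite mxE mul1r.
by case: (A01 j k) => ->; rewrite ?real0 ?real1.
Qed.

Lemma disc_ne0 m (A : 'M[algC]_m) :
  A^T = A ->
  (const_mx 1 - 2%:R *: A) *m (const_mx 1 - 2%:R *: A) = (m%:R)%:M ->
  (forall i j, A i j = 0 \/ A i j = 1) ->
  (exists i j, ((const_mx 1 : 'rV_m) *m A) 0 i != ((const_mx 1 : 'rV_m) *m A) 0 j) ->
  4%:R * m%:R ^+ 2 + 16%:R *
    (m%:R + 2%:R * dotv ((const_mx 1 : 'rV_m) *m A) (const_mx 1) - m%:R ^+ 2) != 0.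
Proof.
move=> tA hK A01 [i [j dij]]; apply/eqP => h0.
have hdd := dd_id tA hK.
set u := (const_mx 1 : 'rV_m) in hdd h0 dij *.
set d := u *m A in hdd h0 dij *.
have uu : dotv u u = m%:R.
  by rewrite /dotv (eq_bigr (fun _ => 1)) ?sumr_const ?card_ord // => k _; rewrite !mxE mulr1.
set D := dotv d u in hdd h0.
set z := d - (m%:R / 4%:R) *: u.
have zz : dotv z z = 0.
  rewrite /z dotvBl !dotvBr !dotvZl !dotvZr uu [dotv u d]dotvC -/D.
  move: hdd h0; set N : algC := m%:R; set dd := dotv d d => hdd h0.
  have -> : dd = (4%:R * dd) / 4%:R by field.
  rewrite hdd.
  transitivity (N * (4%:R * N ^+ 2 + 16%:R * (N + 2%:R * D - N ^+ 2)) / 64%:R); first by field.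
  by rewrite h0 mulr0 mul0r.
have zr k : z 0 k \is Num.real.
  rewrite !mxE; apply: rpredB; first by have := d_real k A01; rewrite mxE.
  by rewrite mulr1; apply: rpredM; [exact: realn | rewrite realV; exact: realn].
have := dotv_self_eq0 zr zz; move/rowP => hz.
move: (hz i) (hz j); rewrite /z !mxE => /eqP; rewrite subr_eq0 => /eqP hi /eqP.
rewrite subr_eq0 => /eqP hj.
by move: dij; rewrite /d !mxE hi hj eqxx.
Qed.

Lemma Qhalf_ne0 m (A : 'M[algC]_m) (s σ : algC) :
  A^T = A ->
  (const_mx 1 - 2%:R *: A) *m (const_mx 1 - 2%:R *: A) = (m%:R)%:M ->
  (forall i j, A i j = 0 \/ A i j = 1) ->
  (exists i j, ((const_mx 1 : 'rV_m) *m A) 0 i != ((const_mx 1 : 'rV_m) *m A) 0 j) ->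
  (σ = 1 \/ σ = -1) -> s ^+ 2 = m%:R -> s \is Num.real -> s != 0 ->
  4%:R * (σ * s / 2%:R) ^+ 2 - 2%:R * m%:R * (σ * s / 2%:R)
    - (m%:R + 2%:R * dotv ((const_mx 1 : 'rV_m) *m A) (const_mx 1) - m%:R ^+ 2) != 0.
Proof.
move=> tA hK A01 [i [j dij]] hσ hs sr s0; apply/eqP => h0.
have hdd := dd_id tA hK.
set u := (const_mx 1 : 'rV_m) in hdd h0 dij *.
set d := u *m A in hdd h0 dij *.
have uu : dotv u u = m%:R.
  by rewrite /dotv (eq_bigr (fun _ => 1)) ?sumr_const ?card_ord // => k _; rewrite !mxE mulr1.
set D := dotv d u in hdd h0.
set y := (s - σ * m%:R) *: u + (2%:R * σ) *: d.
have yy : dotv y y = 0.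
  rewrite /y dotvDl !dotvDr !dotvZl !dotvZr uu [dotv u d]dotvC -/D.
  move: hdd h0; rewrite -hs; set dd := dotv d d => hdd h0.
  have -> : dd = (4%:R * dd) / 4%:R by field.
  rewrite hdd.
  transitivity ((- 2%:R * σ * s) * (4%:R * (σ * s / 2%:R) ^+ 2 - 2%:R * s ^+ 2 * (σ * s / 2%:R) -
      (s ^+ 2 + 2%:R * D - (s ^+ 2) ^+ 2))); first by case: hσ => ->; field.
  by rewrite h0 mulr0.
have yr k : y 0 k \is Num.real.
  rewrite !mxE mulr1; apply: rpredD.
    apply: rpredB => //; apply: rpredM; last exact: realn.
    by case: hσ => ->; rewrite ?real1 ?realN ?real1.
  apply: rpredM; last by have := d_real k A01; rewrite mxE.
  by apply: rpredM; [exact: realn | case: hσ => ->; rewrite ?real1 ?realN ?real1].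
have := dotv_self_eq0 yr yy; move/rowP => hy.
have σ0 : 2%:R * σ != 0 by case: hσ => ->; rewrite ?mulr1 ?mulrN1 ?oppr_eq0 pnatr_eq0.
move: (hy i) (hy j); rewrite /y !mxE => /eqP hi /eqP hj.
move: dij hi hj; rewrite /d !mxE.
set x := \sum_j _; set x' := \sum_j _; set c := (s - σ * m%:R) * 1 => dij /eqP h1 /eqP h2.
have : 2%:R * σ * x = 2%:R * σ * x'.
  apply/eqP; rewrite -subr_eq0; apply/eqP.
  by transitivity ((c + 2%:R * σ * x) - (c + 2%:R * σ * x')); [ring | rewrite ?h1 ?h2 subrr].
by move/(mulfI σ0) => exx; rewrite exx eqxx in dij.
Qed.

Lemma deg_row m (e : rel 'I_m) k : symmetric e ->
  ((const_mx 1 : 'rV[algC]_m) *m adj_mx e) 0 k = (valency e k)%:R.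
Proof.
move=> se; rewrite mxE /valency -sum1_card natr_sum.
rewrite [RHS]big_mkcond; apply: eq_bigr => j _; rewrite !mxE mul1r inE se; by case: (e k j).
Qed.

Lemma adj_tr m (e : rel 'I_m) : symmetric e -> (adj_mx e)^T = adj_mx e.
Proof. by move=> se; apply/matrixP => i j; rewrite !mxE se. Qed.

Lemma spec4 (m s : nat) (e : rel 'I_m) :
  symmetric e -> irreflexive e -> m = (s * s)%N -> (3 <= s)%N ->
  (const_mx 1 - 2%:R *: adj_mx e) *m (const_mx 1 - 2%:R *: adj_mx e) = (m%:R)%:M ->
  (exists i j, valency e i != valency e j) ->
  num_eigenvalues_eq e 4.
Proof.
move=> se ie hm hs3 hK [i [j vij]].
set A := adj_mx e in hK *.
have tA : A^T = A by apply: adj_tr.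
have A0 x : A x x = 0 by rewrite !mxE ie.
have A01 x y : A x y = 0 \/ A x y = 1 by rewrite !mxE; case: (e x y); [right|left].
have dne : exists i j, ((const_mx 1 : 'rV_m) *m A) 0 i != ((const_mx 1 : 'rV_m) *m A) 0 j.
  by exists i, j; rewrite !deg_row // eqr_nat.
have ij : i != j by apply: contraNneq vij => ->.
set S : algC := s%:R.
have hs : S ^+ 2 = m%:R by rewrite /S -natrX hm expnS expn1.
have Sr : S \is Num.real by apply: realn.
have S0 : S != 0 by rewrite pnatr_eq0; apply/eqP; lia.
have Sa : S * (S + 2%:R * 1) != 0.
  by rewrite mulr1 -natrD -natrM pnatr_eq0; apply/eqP; nia.
have Sb : S * (S + 2%:R * -1) != 0.
  have -> : S * (S + 2%:R * -1) = (s * (s - 2))%:R by rewrite natrM natrB ?mulrN1 //; lia.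
  by rewrite pnatr_eq0; apply/eqP; nia.
have Sc : S + 1 != 0 by rewrite /S -(natrD _ s 1) pnatr_eq0 addn1.
have Sd : S + -1 != 0.
  have -> : S + -1 = (s - 1)%:R by rewrite natrB //; lia.
  by rewrite pnatr_eq0; apply/eqP; lia.
set N : algC := m%:R.
set D := dotv ((const_mx 1 : 'rV_m) *m A) (const_mx 1).
set c := N + 2%:R * D - N ^+ 2.
set sq := sqrtC (4%:R * N ^+ 2 + 16%:R * c).
set r1 := (2%:R * N + sq) / 8%:R; set r2 := (2%:R * N - sq) / 8%:R.
have Qfac x : 4%:R * x ^+ 2 - 2%:R * N * x - c = 4%:R * ((x - r1) * (x - r2)).
  have hsq : sq ^+ 2 = 4%:R * N ^+ 2 + 16%:R * c by rewrite sqrtCK.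
  rewrite /r1 /r2; apply/eqP; rewrite -subr_eq0; apply/eqP.
  transitivity ((sq ^+ 2 - (4%:R * N ^+ 2 + 16%:R * c)) / 16%:R); first by field.
  by rewrite hsq subrr mul0r.
have Qr1 : 4%:R * r1 ^+ 2 - 2%:R * N * r1 - c = 0 by rewrite Qfac subrr mul0r mulr0.
have Qr2 : 4%:R * r2 ^+ 2 - 2%:R * N * r2 - c = 0 by rewrite Qfac subrr mulr0 mulr0.
have Qa1 := Qhalf_ne0 tA hK A01 dne (or_intror erefl) hs Sr S0.
have Qa2 := Qhalf_ne0 tA hK A01 dne (or_introl erefl) hs Sr S0.
exists [:: - (1 * S) / 2%:R; - (-1 * S) / 2%:R; r1; r2]; split => //.
- have e1 : - (1 * S) / 2%:R = -1 * S / 2%:R by ring.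
  have e2 : - (-1 * S) / 2%:R = 1 * S / 2%:R by ring.
  rewrite -/N -/D -/c -e1 in Qa1; rewrite -/N -/D -/c -e2 in Qa2.
  have neq x y : 4%:R * x ^+ 2 - 2%:R * N * x - c != 0 ->
      4%:R * y ^+ 2 - 2%:R * N * y - c = 0 -> x != y.
    by move=> h1 h2; apply: contra h1 => /eqP ->; rewrite h2.
  rewrite /= !inE !negb_or andbT.
  rewrite (neq _ _ Qa1 Qr1) (neq _ _ Qa1 Qr2) (neq _ _ Qa2 Qr1) (neq _ _ Qa2 Qr2) /= andbT.
  apply/andP; split.
    rewrite e1 e2; apply/eqP => h; move: S0.
    have <- : 1 * S / 2%:R - (-1 * S / 2%:R) = S by field.
    by rewrite h subrr eqxx.
  apply/eqP => h; have : sq = 0.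
    have -> : sq = (r1 - r2) * 4%:R by rewrite /r1 /r2; field.
    by rewrite h subrr mul0r.
  move/eqP; rewrite sqrtC_eq0.
  by apply/negP; rewrite -/c; exact: (disc_ne0 tA hK A01 dne).
move=> a; split.
  move=> /(eig_root tA hK); rewrite -/N -/D -/c; case=> h; rewrite !inE.
    have : (2%:R * a) ^+ 2 == S ^+ 2 by rewrite hs -/N -h; apply/eqP; ring.
    rewrite eqf_sqr => /orP [] /eqP h2.
      apply/or4P; apply: Or42; apply/eqP.
      transitivity ((2%:R * a) / 2%:R); first by field.
      by rewrite h2; field.
    apply/or4P; apply: Or41; apply/eqP.
    transitivity ((2%:R * a) / 2%:R); first by field.
    by rewrite h2; field.
  move: h; rewrite Qfac => /eqP; rewrite mulf_eq0 pnatr_eq0 /= mulf_eq0 !subr_eq0.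
  by case/orP => ->; rewrite ?orbT.
rewrite !inE => /or4P [] /eqP ->.
- by apply: (@eig_half m A S 1 i j tA hK A0 A01 _ hs Sa Sc ij); rewrite expr1n.
- by apply: (@eig_half m A S (-1) i j tA hK A0 A01 _ hs Sb Sd ij); rewrite sqrrN expr1n.
- by apply: eig_Q.
- by apply: eig_Q.
Qed.

Definition vec (M : nat) := {ffun 'I_M -> bool * bool}.
Definition bet M (x y : vec M) : bool :=
  \big[addb/false]_(i < M) (((x i).1 && (y i).2) (+) ((x i).2 && (y i).1)).
Definition vadd M (x y : vec M) : vec M :=
  [ffun i => ((x i).1 (+) (y i).1, (x i).2 (+) (y i).2)].
Definition v0 M : vec M := [ffun _ => (false, false)].
Definition sgn (b : bool) : algC := if b then -1 else 1.

Lemma sgnD a b : sgn (a (+) b) = sgn a * sgn b.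
Proof. by case: a; case: b; rewrite /sgn /= ?mulr1 ?mul1r ?mulrNN ?mulr1. Qed.

Lemma betC M (x y : vec M) : bet x y = bet y x.
Proof. by apply: eq_bigr => i _; case: (x i) => [[] []]; case: (y i) => [[] []]. Qed.

Lemma betxx M (x : vec M) : bet x x = false.
Proof. by rewrite /bet big1 // => i _; rewrite andbC addbb. Qed.

Lemma bet0 M (x : vec M) : bet (v0 M) x = false.
Proof. by rewrite /bet big1 // => i _; rewrite ffunE. Qed.

Lemma betDl M (x y z : vec M) : bet (vadd x y) z = bet x z (+) bet y z.
Proof.
rewrite /bet -big_split /=; apply: eq_bigr => i _; rewrite ffunE /=.
by case: (x i) => [[] []]; case: (y i) => [[] []]; case: (z i) => [[] []].
Qed.

Lemma betDr M (x y z : vec M) : bet z (vadd x y) = bet z x (+) bet z y.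
Proof. by rewrite betC betDl !(betC z). Qed.

Lemma vaddK M (t : vec M) : involutive (fun y : vec M => vadd y t).
Proof.
move=> y; apply/ffunP => i; rewrite !ffunE /=.
by case: (y i) => a b /=; rewrite -!addbA !addbb !addbF.
Qed.

Lemma vadd_eq0 M (x y : vec M) : (vadd x y == v0 M) = (x == y).
Proof.
apply/eqP/eqP => [h|->]; last first.
  by apply/ffunP => i; rewrite !ffunE !addbb.
apply/ffunP => i; move/ffunP/(_ i): h; rewrite !ffunE.
by case: (x i) => [[] []]; case: (y i) => [[] []].
Qed.

Lemma char_sum M (x : vec M) :
  \sum_(y : vec M) sgn (bet x y) = if x == v0 M then (#|vec M|)%:R else 0.
Proof.
case: eqP => [->|/eqP xn0].
  by rewrite (eq_bigr (fun _ => 1)) ?sumr_const // => y _; rewrite bet0.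
have [i xi] : exists i, x i != (false, false).
  apply/existsP; apply: contraNT xn0 => /existsPn h.
  by apply/eqP/ffunP => j; rewrite ffunE; apply/eqP/negbNE/h.
pose t : vec M := [ffun j => if j == i then (~~ (x i).1, (x i).1) else (false, false)].
have bt : bet x t = true.
  rewrite /bet (bigD1 i) //= big1 => [|j ji]; last by rewrite ffunE (negbTE ji) !andbF.
  rewrite ffunE eqxx /= addbF.
  by move: xi; case: (x i) => [[] []].
set S := \sum_y _.
have hS : S = - S.
  rewrite {1}/S (reindex_inj (inv_inj (vaddK t))) /= -sumrN.
  by apply: eq_bigr => y _; rewrite betDr bt sgnD /sgn mulrN1.
have : S *+ 2 = 0 by rewrite mulr2n {1}hS addNr.
by move/eqP; rewrite mulrn_eq0 /= => /eqP.
Qed.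

Definition gedge M (f : vec M -> bool) (x y : vec M) := bet x y (+) f x (+) f y.

Lemma Ksum M (f : vec M -> bool) x y :
  \sum_z sgn (gedge f x z) * sgn (gedge f z y) = if x == y then (#|vec M|)%:R else 0.
Proof.
have s2 b : sgn b * sgn b = 1 by case: b; rewrite /sgn ?mulrNN mulr1.
transitivity (sgn (f x) * sgn (f y) * \sum_z sgn (bet (vadd x y) z)).
  rewrite mulr_sumr; apply: eq_bigr => z _.
  rewrite /gedge !sgnD betDl (betC y z) sgnD.
  transitivity (sgn (f x) * sgn (f y) * (sgn (bet x z) * sgn (bet z y)) * (sgn (f z) * sgn (f z))); first by ring.
  by rewrite s2 mulr1.
rewrite char_sum vadd_eq0; case: eqP => [->|_]; last by rewrite mulr0.
by rewrite s2 mul1r.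
Qed.

Definition eI M (f : vec M -> bool) : rel 'I_#|vec M| :=
  fun i j => gedge f (enum_val i) (enum_val j).

Lemma K_id M (f : vec M -> bool) :
  let A := adj_mx (eI f) in
  (const_mx 1 - 2%:R *: A) *m (const_mx 1 - 2%:R *: A) = ((#|vec M|)%:R)%:M.
Proof.
move=> A; apply/matrixP => i j; rewrite !mxE.
have hs (b : bool) : 1 - 2%:R * (b%:R : algC) = sgn b by case: b; rewrite /sgn /=; ring.
under eq_bigr do rewrite !mxE !hs.
rewrite /eI.
rewrite -(big_enum_val (A := predT) (fun z => sgn (gedge f (enum_val i) z) * sgn (gedge f z (enum_val j)))).
rewrite Ksum (inj_eq enum_val_inj); case: (i == j); by rewrite ?mulr1n ?mulr0n.
Qed.

Local Close Scope ring_scope.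

Lemma two_le_exp k : (2 * k <= 2 ^ k)%N.
Proof.
elim: k => // k IH; rewrite expnS.
case: k IH => // k IH.
have : (1 <= 2 ^ k.+1)%N by rewrite expn_gt0.
lia.
Qed.

Definition embP M (T : finType) (S : {set T}) (I : {set 'I_M}) (G : rel T) (φ : T -> vec M) :=
  [/\ {in S &, injective φ}, {in S, forall a, φ a != v0 M},
      {in S, forall a j, j \notin I -> φ a j = (false, false)} &
      {in S &, forall a b, bet (φ a) (φ b) = G a b}].

Lemma embed_base M (T : finType) (S : {set T}) (I : {set 'I_M}) (G : rel T) :
  {in S &, forall a b, G a b = false} -> (#|S| < 2 * #|I|)%N ->
  exists φ, embP S I G φ.
Proof.
move=> G0 hS.
pose Y := [set v : vec M | (v != v0 M) &&
   [forall j, ((v j).2 == false) && ((j \notin I) ==> ((v j).1 == false))]].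
pose g (P : {set 'I_M}) : vec M := [ffun j => (j \in P, false)].
have ginj : injective g.
  move=> P Q /ffunP h; apply/setP => j; move: (h j); rewrite !ffunE; by case.
have hY : (#|S| <= #|Y|)%N.
  have sub : g @: (powerset I :\ set0) \subset Y.
    apply/subsetP => v /imsetP [P]; rewrite !inE => /andP [Pn0 PI] ->.
    apply/andP; split.
      apply: contra Pn0 => /eqP /ffunP h; apply/eqP/setP => j.
      by move: (h j); rewrite !ffunE inE => -[].
    apply/forallP => j; rewrite ffunE /=; apply/implyP => jI.
    by apply/eqP/negbTE; apply: contra jI => jP; apply: (subsetP PI).
  have := subset_leq_card sub; rewrite card_imset //.
  have := cardsD1 set0 (powerset I); rewrite card_powerset !inE sub0set /=.
  have := two_le_exp #|I|; move: (2 ^ #|I|)%N => p; move: #|powerset I :\ set0| => q; lia.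
pose φ w := nth (v0 M) (enum Y) (index w (enum S)).
have φY w : w \in S -> φ w \in Y.
  move=> wS; rewrite -mem_enum; apply: mem_nth.
  rewrite -cardE; apply: leq_trans hY; rewrite cardE index_mem mem_enum //.
have idx w : w \in S -> (index w (enum S) < size (enum Y))%N.
  move=> wS; rewrite -cardE; apply: leq_trans hY; rewrite cardE index_mem mem_enum //.
have φP w j : w \in S -> ((φ w j).2 == false) && ((j \notin I) ==> ((φ w j).1 == false)).
  by move/φY; rewrite inE => /andP [_ /forallP]; apply.
exists φ; split.
- move=> a b aS bS h.
  have := nth_uniq (v0 M) (idx a aS) (idx b bS) (enum_uniq (pred_of_set Y)).
  rewrite /φ in h; rewrite h eqxx => /esym/eqP hab.
  have aE : a \in enum S by rewrite mem_enum.
  have bE : b \in enum S by rewrite mem_enum.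
  by rewrite -(nth_index a aE) hab nth_index.
- by move=> a /φY; rewrite inE => /andP [].
- move=> a aS j jI; have := φP a j aS; rewrite jI /=.
  by case: (φ a j) => [x y] /= /andP [/eqP -> /eqP ->].
move=> a b aS bS; rewrite G0 // /bet big1 // => j _.
move: (φP a j aS) (φP b j bS) => /andP [/eqP -> _] /andP [/eqP -> _].
by rewrite !andbF.
Qed.

Definition bterm (p q : bool * bool) := (p.1 && q.2) (+) (p.2 && q.1).

Lemma bet_split M (u v : vec M) i :
  bet u v = bterm (u i) (v i) (+) \big[addb/false]_(j < M | j != i) bterm (u j) (v j).
Proof. by rewrite /bet (bigD1 i). Qed.

Lemma off_eq M (u v u' v' : vec M) i :
  (forall j, j != i -> u j = u' j) -> (forall j, j != i -> v j = v' j) ->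
  \big[addb/false]_(j < M | j != i) bterm (u j) (v j) =
  \big[addb/false]_(j < M | j != i) bterm (u' j) (v' j).
Proof. by move=> hu hv; apply: eq_bigr => j ji; rewrite hu // hv. Qed.

Lemma off_zero M (u v : vec M) i :
  (forall j, j != i -> u j = (false, false)) ->
  \big[addb/false]_(j < M | j != i) bterm (u j) (v j) = false.
Proof. by move=> hu; rewrite big1 // => j ji; rewrite hu. Qed.

Lemma embed_step M (T : finType) (S : {set T}) (I : {set 'I_M}) (G : rel T) x y i :
  x \in S -> y \in S -> x != y -> G x y -> i \in I ->
  (forall a b, G a b = G b a) -> (forall a, G a a = false) ->
  (exists φ', embP (S :\ x :\ y) (I :\ i)
       (fun w w' => G w w' (+) (G w x && G w' y) (+) (G w y && G w' x)) φ') ->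
  exists φ, embP S I G φ.
Proof.
move=> xS yS xy Gxy iI Gs G0 [φ' [inj' nz' sup' bet']].
pose c w := if w == x then (true, false) else if w == y then (false, true) else (G w y, G w x).
pose φ w : vec M := [ffun j => if j == i then c w else
   if (w == x) || (w == y) then (false, false) else φ' w j].
have φi w : φ w i = c w by rewrite ffunE eqxx.
have φo w j : j != i -> φ w j = if (w == x) || (w == y) then (false, false) else φ' w j.
  by move=> ji; rewrite ffunE (negbTE ji).
have S'P w : (w \in S :\ x :\ y) = [&& w != y, w != x & w \in S] by rewrite !inE.
have φ'i w : w \in S :\ x :\ y -> φ' w i = (false, false).
  by move=> wS; apply: sup' => //; rewrite !inE eqxx.
have betS' a b : a \in S :\ x :\ y -> b \in S :\ x :\ y ->
    bet (φ a) (φ b) = bterm (c a) (c b) (+) bet (φ' a) (φ' b).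
  move=> aS bS; rewrite (bet_split _ _ i) (bet_split (φ' a) _ i) φ'i // φ'i // !φi.
  congr (_ (+) _); apply: off_eq => j ji; rewrite φo //.
    by move: aS; rewrite S'P => /and3P [/negbTE -> /negbTE -> _].
  by move: bS; rewrite S'P => /and3P [/negbTE -> /negbTE -> _].
have betxy a b : (a == x) || (a == y) ->
    bet (φ a) (φ b) = bterm (c a) (c b).
  move=> axy; rewrite (bet_split _ _ i) off_zero ?addbF ?φi // => j ji.
  by rewrite φo // axy.
have cS a : a \in S -> [\/ a = x, a = y | a \in S :\ x :\ y].
  move=> aS; case: (eqVneq a x) => [->|ax]; first by constructor 1.
  case: (eqVneq a y) => [->|ay]; first by constructor 2.
  by constructor 3; rewrite S'P ax ay aS.
have nzo w : w \in S :\ x :\ y -> exists2 j, j != i & φ w j != (false, false).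
  move=> wS; case/boolP: [exists j, φ' w j != (false, false)] => [/existsP [j hj]|/existsPn h].
    have ji : j != i by apply: contraNneq hj => ->; rewrite φ'i.
    exists j => //; rewrite φo //.
    by move: wS; rewrite S'P => /and3P [/negbTE -> /negbTE -> _].
  exfalso; move: (nz' w wS); apply/negP; rewrite negbK; apply/eqP/ffunP => j.
  by rewrite ffunE; apply/eqP/negbNE/h.
have zo a j : (a == x) || (a == y) -> j != i -> φ a j = (false, false).
  by move=> axy ji; rewrite φo // axy.
have yx : (y == x) = false by apply/negbTE; rewrite eq_sym.
have cx : c x = (true, false) by rewrite /c eqxx.
have cy : c y = (false, true) by rewrite /c yx eqxx.
have cw w : w \in S :\ x :\ y -> c w = (G w y, G w x).
  by rewrite S'P => /and3P [/negbTE wy /negbTE wx _]; rewrite /c wx wy.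
have offc a b : (a == x) || (a == y) -> b \in S :\ x :\ y -> φ a != φ b.
  move=> axy bS'; have [j ji hj] := nzo b bS'; apply: contraNneq hj => <-.
  by rewrite zo.
exists φ; split.
- move=> a b aS bS hab.
  have hi := congr1 (fun v : vec M => v i) hab; rewrite /= !φi in hi.
  case: (cS a aS) => [ax|ay|aS']; case: (cS b bS) => [bx|b_y|bS'];
    rewrite ?ax ?ay ?bx ?b_y; rewrite ?ax ?ay ?bx ?b_y in hi hab => //.
  + by rewrite cx cy in hi.
  + by move: (offc x b); rewrite eqxx hab eqxx => /(_ isT bS').
  + by rewrite cx cy in hi.
  + by move: (offc y b); rewrite eqxx orbT hab eqxx => /(_ isT bS').
  + by move: (offc x a); rewrite eqxx -hab eqxx => /(_ isT aS').
  + by move: (offc y a); rewrite eqxx orbT -hab eqxx => /(_ isT aS').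
  apply: inj' => //; apply/ffunP => j; case: (eqVneq j i) => [->|ji]; first by rewrite !φ'i.
  move/ffunP/(_ j): hab; rewrite !φo //.
  move: aS' bS'; rewrite !S'P => /and3P [/negbTE -> /negbTE -> _] /and3P [/negbTE -> /negbTE -> _].
  by [].
- move=> a aS; case: (cS a aS) => [->|->|aS'].
  + by apply/eqP => /ffunP/(_ i); rewrite φi cx ffunE.
  + by apply/eqP => /ffunP/(_ i); rewrite φi cy ffunE.
  have [j ji hj] := nzo a aS'; apply: contraNneq hj => ->; by rewrite ffunE.
- move=> a aS j jI.
  have ji : j != i by apply: contraNneq jI => ->.
  rewrite φo //; case: ifP => // /negbT; rewrite negb_or => /andP [ax ay].
  by apply: sup'; rewrite !inE ?ax ?ay ?aS ?(negbTE jI) ?andbF.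
move=> a b aS bS.
have bt p q : bterm p q = (p.1 && q.2) (+) (p.2 && q.1) by [].
case: (cS a aS) => [->|->|aS']; case: (cS b bS) => [->|->|bS'].
- by rewrite betxy ?eqxx // cx G0.
- by rewrite betxy ?eqxx // cx cy Gxy.
- by rewrite betxy ?eqxx // cx (cw b bS') bt /= addbF Gs.
- by rewrite betxy ?eqxx ?orbT // cx cy Gs Gxy.
- by rewrite betxy ?eqxx ?orbT // cy G0.
- by rewrite betxy ?eqxx ?orbT // cy (cw b bS') bt /= Gs.
- by rewrite betC betxy ?eqxx // cx (cw a aS') bt /= addbF.
- by rewrite betC betxy ?eqxx ?orbT // cy (cw a aS') bt /=.
rewrite betS' // bet' // (cw a aS') (cw b bS') bt /=.
by case: (G a b); case: (G a x); case: (G a y); case: (G b x); case: (G b y).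
Qed.

Lemma embed M (T : finType) n : forall (S : {set T}) (I : {set 'I_M}) (G : rel T),
  (#|S| <= n)%N -> (forall a b, G a b = G b a) -> (forall a, G a a = false) ->
  (#|S| < 2 * #|I|)%N -> exists φ, embP S I G φ.
Proof.
elim: n => [|n IH] S I G hn Gs G0 hSI.
  apply: embed_base => // a b aS.
  have : S = set0 by apply/eqP; rewrite -cards_eq0; lia.
  by move=> S0; rewrite S0 inE in aS.
case/boolP: [exists a in S, exists b in S, G a b]; last first.
  move/exists_inPn => h; apply: embed_base => // a b aS bS.
  by apply/negbTE; move: (h a aS) => /exists_inPn; apply.
case/exists_inP => a aS /exists_inP [b bS Gab].
have ab : a != b by apply: contraTneq Gab => ->; rewrite G0.
have c1 := cardsD1 a S; have c2 := cardsD1 b (S :\ a).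
rewrite aS in c1; rewrite !inE eq_sym ab bS /= in c2.
have [i iI] : exists i, i \in I.
  by apply/set0Pn; rewrite -card_gt0; lia.
have c3 := cardsD1 i I; rewrite iI in c3.
apply: (embed_step aS bS ab Gab iI Gs G0).
apply: IH.
- lia.
- move=> w w'; rewrite (Gs w' w).
  by case: (G w a); case: (G w b); case: (G w' a); case: (G w' b); case: (G w w').
- by move=> w; rewrite G0; case: (G w a); case: (G w b).
- lia.
Qed.

Local Open Scope ring_scope.

Lemma card_sum (U : finType) (P : pred U) :
  \sum_z ((P z)%:R : algC) = (#|[set z | P z]|)%:R.
Proof.
rewrite -sum1_card natr_sum [RHS]big_mkcond /=; apply: eq_bigr => z _.
by rewrite inE; case: (P z).
Qed.

Lemma card_sumC (U : finType) (P : pred U) :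
  \sum_z (((~~ P z) : bool)%:R : algC) = (#|U|)%:R - (#|[set z | P z]|)%:R.
Proof.
rewrite -card_sum; apply/eqP; rewrite eq_sym subr_eq -big_split /=.
rewrite (eq_bigr (fun _ => 1)) ?sumr_const ?card_ord //; last by move=> z _; case: (P z); rewrite /= ?addr0 ?add0r.
Qed.

Lemma half M (x : vec M) : x != v0 M ->
  (#|[set z | ~~ bet x z]|)%:R = (#|vec M|)%:R / 2%:R :> algC.
Proof.
move=> xn0; have := char_sum x; rewrite (negbTE xn0).
have -> : \sum_z sgn (bet x z) = \sum_z ((~~ bet x z : bool)%:R - (bet x z : bool)%:R).
  by apply: eq_bigr => z _; rewrite /sgn; case: (bet x z); rewrite /= ?subr0 ?sub0r.
have hF := card_sum (fun z => ~~ bet x z); rewrite card_sumC in hF.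
rewrite sumrB card_sumC card_sum => h.
rewrite -hF; apply/eqP; rewrite -subr_eq0; apply/eqP.
by rewrite -[RHS](mulr0 (2%:R^-1)) -h; field.
Qed.

Definition fPhi M (T : finType) (φ : T -> vec M) : vec M -> bool :=
  fun v => v \in [set φ a | a in T].

Lemma val_phi M (T : finType) (d : rel T) (φ : T -> vec M) a :
  injective φ -> (forall a, φ a != v0 M) -> (forall a b, bet (φ a) (φ b) = d a b) ->
  (valency (gedge (fPhi φ)) (φ a))%:R =
    (#|vec M|)%:R / 2%:R + 2%:R * (valency d a)%:R - (#|T|)%:R :> algC.
Proof.
move=> φinj φn0 φb.
have fa : fPhi φ (φ a) = true by rewrite /fPhi imset_f.
rewrite /valency -card_sum /gedge fa.
have ind (b c : bool) : ((b (+) true (+) c : bool)%:R : algC) =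
    (~~ b : bool)%:R + (c : bool)%:R * ((b : bool)%:R - (~~ b : bool)%:R).
  by case: b; case: c; rewrite /= ?mulr0 ?addr0 ?mul1r ?subr0 ?sub0r ?add0r //; ring.
under eq_bigr do rewrite ind.
rewrite big_split /= card_sum half //.
rewrite (eq_bigr (fun z => if z \in [set φ a | a in T] then ((bet (φ a) z : bool)%:R - (~~ bet (φ a) z : bool)%:R) else 0)); last first.
  by move=> z _; rewrite /fPhi; case: (z \in _); rewrite /= ?mul1r ?mul0r.
rewrite -big_mkcond /= big_imset /=; last by move=> x y _ _; apply: φinj.
under eq_bigr do rewrite φb.
rewrite sumrB card_sum card_sumC /valency; ring.
Qed.

Lemma quarter M (x z : vec M) : x != v0 M -> z != v0 M -> x != z ->
  (4 * #|[set y | bet x y && ~~ bet z y]|)%N = #|vec M|.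
Proof.
move=> xn0 zn0 xz.
have ind (b c : bool) : ((b && ~~ c : bool)%:R : algC) = (1 - sgn b) * (1 + sgn c) / 4%:R.
  by case: b; case: c; rewrite /sgn /=; field.
have h : ((4 * #|[set y | bet x y && ~~ bet z y]|)%N%:R : algC) = (#|vec M|)%:R.
  rewrite natrM -card_sum; under eq_bigr do rewrite ind.
  rewrite -mulr_suml.
  have -> : \sum_y (1 - sgn (bet x y)) * (1 + sgn (bet z y)) =
     \sum_(y : vec M) 1 - \sum_y sgn (bet x y) + \sum_y sgn (bet z y)
       - \sum_y sgn (bet (vadd x z) y).
    rewrite -!sumrB -big_split /= -sumrB; apply: eq_bigr => y _.
    rewrite betDl sgnD; ring.
  rewrite !char_sum (negbTE xn0) (negbTE zn0) vadd_eq0 (negbTE xz) sumr_const.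
  by rewrite subr0 addr0 subr0 /=; field.
by move/eqP: h; rewrite eqr_nat => /eqP.
Qed.

Lemma conn_vec M (T : finType) (φ : T -> vec M) (a0 : T) :
  injective φ -> (forall a, φ a != v0 M) -> (4 * #|T| < #|vec M|)%N ->
  forall x, connect (gedge (fPhi φ)) x (v0 M).
Proof.
move=> φinj φn0 hcard.
set e0 := gedge (fPhi φ).
have f0 : fPhi φ (v0 M) = false.
  by apply/negbTE/imsetP => -[a _ h]; move: (φn0 a); rewrite -h eqxx.
have fφ a : fPhi φ (φ a) = true by rewrite /fPhi imset_f.
have eφ0 a : e0 (φ a) (v0 M) by rewrite /e0 /gedge betC bet0 fφ f0.
move=> x; case/boolP: (fPhi φ x) => [/imsetP [a _ ->]|xn]; first exact: connect1.
case: (eqVneq x (v0 M)) => [->|xn0]; first exact: connect0.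
case/boolP: [exists a, ~~ bet x (φ a)] => [/existsP [a ha]|/existsPn hall].
  apply: (connect_trans (y := φ a)); last exact: connect1.
  by apply: connect1; rewrite /e0 /gedge (negbTE xn) fφ addbF addbT.
set z := φ a0.
have xz : x != z by apply: contraNneq xn => ->; rewrite fφ.
have hq := quarter xn0 (φn0 a0) xz.
have [y yY yn] : exists2 y, y \in [set y | bet x y && ~~ bet z y] & ~~ fPhi φ y.
  case/boolP: [exists y in [set y | bet x y && ~~ bet z y], ~~ fPhi φ y].
    by move/exists_inP.
  move/exists_inPn => h; exfalso.
  have : [set y | bet x y && ~~ bet z y] \subset [set φ a | a in T].
    by apply/subsetP => y /h; rewrite negbK.
  move/subset_leq_card; rewrite card_imset //.
  have hk : forall k N n : nat, (4 * k)%N = N -> (4 * n < N)%N -> (k <= n)%N -> False by lia.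
  by move=> hle; apply: (hk _ _ _ hq hcard hle).
move: yY; rewrite inE => /andP [xy zy].
apply: (connect_trans (y := y)).
  by apply: connect1; rewrite /e0 /gedge xy (negbTE xn) (negbTE yn).
apply: (connect_trans (y := z)); last exact: connect1 (eφ0 a0).
by apply: connect1; rewrite /e0 /gedge (negbTE yn) fφ betC (negbTE zy).
Qed.

Lemma undup_size_eq (A : eqType) (f g : A -> nat) (s : seq A) :
  {in s &, forall a b, (f a == f b) = (g a == g b)} ->
  size (undup (map f s)) = size (undup (map g s)).
Proof.
elim: s => //= a s IH H.
have H' : {in s &, forall a b, (f a == f b) = (g a == g b)}.
  by move=> x y xs ys; apply: H; rewrite inE ?xs ?ys orbT.
have -> : (f a \in [seq f i | i <- s]) = (g a \in [seq g i | i <- s]).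
  apply/mapP/mapP => -[b bs h]; exists b => //; apply/eqP.
    by rewrite -H ?inE ?eqxx ?bs ?orbT // h.
  by rewrite H ?inE ?eqxx ?bs ?orbT // h.
by case: ifP => _ /=; rewrite IH.
Qed.

Lemma two_vals (T : finType) (h : T -> nat) :
  (2 <= size (undup [seq h x | x <- enum T]))%N -> exists a b, h a != h b.
Proof.
move=> h2; case/boolP: [exists a, exists b, h a != h b].
  by case/existsP => a /existsP [b hb]; exists a, b.
move/existsPn => hall; exfalso.
case E: (enum T) h2 => [|a0 s] //= h2.
have : (size (undup (h a0 :: [seq h x | x <- s])) <= size [:: h a0])%N.
  apply: uniq_leq_size; first exact: undup_uniq.
  move=> v; rewrite mem_undup inE => /orP [/eqP ->|/mapP [b _ ->]]; first by rewrite inE.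
  by move: (hall a0) => /existsPn /(_ b); rewrite negbK inE eq_sym.
by move: h2 => /=; case: ifP => _ /=; lia.
Qed.

Lemma nval_le (T : finType) m (dv : T -> nat) (ev : 'I_m -> nat) (ψ : T -> 'I_m) :
  (forall a b, (dv a == dv b) = (ev (ψ a) == ev (ψ b))) ->
  (size (undup [seq dv x | x <- enum T]) <= size (undup [seq ev i | i <- enum 'I_m]))%N.
Proof.
move=> H; rewrite (@undup_size_eq _ dv (fun a => ev (ψ a))); last by move=> a b _ _; apply: H.
apply: uniq_leq_size; first exact: undup_uniq.
move=> v; rewrite !mem_undup => /mapP [a _ ->].
by apply: map_f; rewrite mem_enum.
Qed.

Local Close Scope ring_scope.

Lemma connect_map (U V : finType) (e0 : rel U) (e' : rel V) (h : U -> V) x y :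
  (forall a b, e0 a b -> e' (h a) (h b)) -> connect e0 x y -> connect e' (h x) (h y).
Proof.
move=> H /connectP [p pth ->]; elim: p x pth => /= [|z p IH] x; first by rewrite connect0.
case/andP => exz pth; apply: connect_trans (connect1 _) (IH _ pth); exact: H.
Qed.

Lemma valE M (f : vec M -> bool) x :
  valency (eI f) (enum_rank x) = valency (gedge f) x.
Proof.
rewrite /valency -(card_imset _ enum_val_inj); apply: eq_card => y.
rewrite inE; apply/imsetP/idP => [[j]|h].
  by rewrite inE /eI enum_rankK => h ->.
by exists (enum_rank y); rewrite ?inE /eI enum_rankK // ; rewrite enum_rankK.
Qed.

Lemma gedgeC M (f : vec M -> bool) x y : gedge f x y = gedge f y x.
Proof. by rewrite /gedge betC -!addbA (addbC (f x)). Qed.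

Lemma card_vec M : #|vec M| = (4 ^ M)%N.
Proof. by rewrite /vec card_ffun card_prod card_bool card_ord. Qed.

Lemma four_pow k : (1 <= k)%N -> (2 * k + 1 < 4 ^ k)%N.
Proof.
move=> k1; have := two_le_exp (2 * k); rewrite expnM.
have -> : (2 ^ 2 = 4)%N by []. lia.
Qed.

Theorem theorem8 (T : finType) (d : rel T) (t : nat) :
  3 <= t -> simple_graph d -> num_valencies d = t ->
  exists (m : nat) (e : rel 'I_m),
    [/\ simple_graph e, connected_graph e, m <= 2 ^ (#|T| + 2),
        num_eigenvalues_eq e 4 & t <= num_valencies e] /\ induced_subgraph d e.
Proof.
move=> ht [sd id] hnv.
set n := #|T|.
have tn : (t <= n)%N.
  by rewrite -hnv /num_valencies; apply: leq_trans (size_undup _) _; rewrite size_map -cardE.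
pose M := (n./2 + 1)%N.
have [φ [φinj φn0 _ φb]] := @embed M T n setT setT d ltac:(by rewrite cardsT) sd id
   ltac:(by rewrite !cardsT card_ord; rewrite /M; lia).
have φI : injective φ by move=> a b; apply: φinj; rewrite inE.
have φn : forall a, φ a != v0 M by move=> a; apply: φn0; rewrite inE.
have φB : forall a b, bet (φ a) (φ b) = d a b by move=> a b; apply: φb; rewrite inE.
pose f := fPhi φ.
pose ψ a := enum_rank (φ a).
have fφ a : f (φ a) = true by rewrite /f /fPhi imset_f.
have heq a b : (valency d a == valency d b) =
    (valency (eI f) (ψ a) == valency (eI f) (ψ b)).
  rewrite /ψ !valE /f -[X in _ = X](eqr_nat algC) !(val_phi (d := d)) // -(eqr_nat algC).
  apply/eqP/eqP => [->//|h].
  have : ((2%:R : algC) * (valency d a)%:R = 2%:R * (valency d b)%:R)%R.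
    by apply: (addIr (- (#|T|%:R))%R); apply: (addrI ((#|vec M|)%:R / 2%:R)%R); rewrite !addrA.
  by move/(mulfI _) => -> //; rewrite pnatr_eq0.
exists #|vec M|, (eI f); split; last first.
  exists ψ; split; first by move=> a b /enum_rank_inj /φI.
  by move=> a b; rewrite /eI /ψ !enum_rankK /gedge φB !fφ addbT addbT negbK.
have [a [b dab]] : exists a b, valency d a != valency d b.
  by apply: two_vals; rewrite -/(num_valencies d) hnv; lia.
split.
- split; first by move=> i j; rewrite /eI gedgeC.
  by move=> i; rewrite /eI /gedge betxx addbb.
- have a0 := a.
  have hc x : connect (eI f) (enum_rank x) (enum_rank (v0 M)).
    apply: (connect_map (e0 := gedge f)); last first.
      apply: (conn_vec a0 φI φn); rewrite card_vec /M expnD expn1.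
      have := four_pow (k := n./2); lia.
    by move=> u v h; rewrite /eI !enum_rankK.
  have cs := sym_connect_sym (e := eI f)
    ltac:(by move=> i j; rewrite /eI gedgeC).
  move=> i j; rewrite -(enum_valK i) -(enum_valK j).
  by apply: connect_trans (hc _) _; rewrite cs; apply: hc.
- rewrite card_vec; have -> : (4 = 2 ^ 2)%N by [].
  by rewrite -expnM leq_exp2l /M //; lia.
- apply: (@spec4 _ (2 ^ M) (eI f)).
  + by move=> i j; rewrite /eI gedgeC.
  + by move=> i; rewrite /eI /gedge betxx addbb.
  + by rewrite card_vec -expnMn.
  + rewrite /M expnD expn1; have : (1 <= 2 ^ n./2)%N by rewrite expn_gt0.
    have : (2 <= 2 ^ n./2)%N.
      have := two_le_exp n./2; lia.
    lia.
  + exact: K_id.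
  + by exists (ψ a), (ψ b); rewrite -heq.
- rewrite -hnv; apply: nval_le heq.
Qed.
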